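(* Let $h\colon[0,1/2]\to[0,1]$ be the binary entropy function (in bits), $h^{-1}\colon[0,1]\to[0,1/2]$ its inverse, and $a\ast b=a(1-b)+(1-a)b$. For every $x\in[0,1]$, the function $g_x(t)=h\big(h^{-1}(t)\ast h^{-1}(2x-t)\big)$, defined for $t\in[\max\{0,2x-1\},x]$, is decreasing in $t$. *)

(* Defs.v *)
From Stdlib Require Import Reals.
Open Scope R_scope.

Definition xlog2x (x : R) : R :=
  if Rle_dec x 0 then 0 else x * (ln x / ln 2).

Definition hb (p : R) : R := - xlog2x p - xlog2x (1 - p).

Definition bconv (a b : R) : R := a * (1 - b) + (1 - a) * b.

(* Main.v *)
Require Import Defs.
From Stdlib Require Import Reals Lra.
From Coquelicot Require Import Coquelicot.
Open Scope R_scope.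

Definition F (p : R) : R := p * ln p + (1 - p) * ln (1 - p).

Lemma ln_nonpos x : x <= 0 -> ln x = 0.
Proof. intros H. unfold ln. destruct (Rlt_dec 0 x) as [h|h]. exfalso; lra. reflexivity. Qed.

Lemma hb_F p : hb p = - F p / ln 2.
Proof.
  assert (H2 : ln 2 > 0) by (pose proof ln_lt_2; lra).
  assert (E : forall y, xlog2x y = y * ln y / ln 2).
  { intro y. unfold xlog2x. destruct (Rle_dec y 0).
    - rewrite ln_nonpos by lra. unfold Rdiv; ring.
    - unfold Rdiv; ring. }
  unfold hb, F. rewrite !E. field. lra.
Qed.

Lemma F_deriv c : 0 < c < 1 -> derivable_pt_lim F c (ln c - ln (1 - c)).
Proof.
  intros Hc. apply is_derive_Reals. unfold F. auto_derive.
  - repeat split; lra.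
  - replace (1 + - c) with (1 - c) by ring. field. lra.
Qed.

Lemma ln_lt_id y : 0 < y -> ln y < y.
Proof.
  intros Hy. pose proof (exp_ineq1_le (ln y)). rewrite exp_ln in H; lra.
Qed.

Lemma plnp_cont0 : continuity_pt (fun p => p * ln p) 0.
Proof.
  intros eps Heps. exists (Rmin 1 ((eps/2)^2)). split.
  { apply Rmin_pos; [lra|]. apply pow_lt; lra. }
  intros p [_ Hp]. simpl in *. unfold R_dist in *. rewrite Rmult_0_l in *. rewrite Rminus_0_r in *.
  destruct (Rle_dec p 0) as [Hn|Hn].
  - rewrite ln_nonpos by lra. rewrite Rmult_0_r, Rabs_R0. lra.
  - assert (Hp0 : 0 < p) by lra.
    rewrite Rabs_right in Hp by lra.
    assert (Hp1 : p < 1) by (pose proof (Rmin_l 1 (eps/2*(eps/2*1))); lra).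
    assert (Hp2 : p < eps/2*(eps/2*1)) by (pose proof (Rmin_r 1 (eps/2*(eps/2*1))); lra).
    set (s := sqrt p).
    assert (Hs : 0 < s) by (apply sqrt_lt_R0; lra).
    assert (Hss : s * s = p) by (apply sqrt_sqrt; lra).
    assert (Hse : s < eps/2).
    { apply Rsqr_incrst_0; try lra. unfold Rsqr. rewrite Hss. lra. }
    assert (Hl : ln p = - 2 * ln (/ s)).
    { rewrite <- Hss, ln_mult by lra. rewrite ln_Rinv by lra. ring. }
    assert (Hli : ln (/ s) < / s) by (apply ln_lt_id; apply Rinv_0_lt_compat; lra).
    assert (Hlp : ln p < 0).
    { rewrite <- ln_1. apply ln_increasing; lra. }
    rewrite Rabs_left.
    2:{ assert (0 < p * - ln p) by (apply Rmult_lt_0_compat; lra). lra. }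
    rewrite Hl, <- Hss.
    assert (s * s * (2 * ln (/ s)) < s * s * (2 * / s)).
    { apply Rmult_lt_compat_l; [nra|lra]. }
    assert (s * s * (2 * / s) = 2 * s) by (field; lra).
    lra.
Qed.

Lemma F_cont c : 0 <= c < 1 -> continuity_pt F c.
Proof.
  intros Hc. destruct (Req_dec c 0) as [->|Hn].
  - unfold F. apply continuity_pt_plus.
    + apply plnp_cont0.
    + apply derivable_continuous_pt. exists ((-1) * ln (1 - 0) + (1 - 0) * ((-1) * / (1 - 0))).
      apply is_derive_Reals. auto_derive; [lra|]. ring_simplify. reflexivity.
  - apply derivable_continuous_pt. exists (ln c - ln (1 - c)). apply F_deriv. lra.
Qed.

Lemma cmvt (g g' : R -> R) a b : 0 <= a -> a < b -> b < 1 ->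
  (forall c, a < c < b -> derivable_pt_lim g c (g' c)) ->
  (forall c, a <= c <= b -> continuity_pt g c) ->
  exists c, a < c < b /\ (g b - g a) * (ln c - ln (1 - c)) = (F b - F a) * g' c.
Proof.
  intros Ha Hab Hb Hd Hc.
  assert (pr1 : forall c, a < c < b -> derivable_pt F c).
  { intros c Hc'. exists (ln c - ln (1 - c)). apply F_deriv. lra. }
  assert (pr2 : forall c, a < c < b -> derivable_pt g c).
  { intros c Hc'. exists (g' c). apply Hd. exact Hc'. }
  destruct (MVT F g a b pr1 pr2 Hab) as [c [P E]].
  - intros c Hc'. apply F_cont. lra.
  - exact Hc.
  - exists c. split; [exact P|].
    rewrite (derive_pt_eq_0 F c (ln c - ln (1 - c)) (pr1 c P)) in E by (apply F_deriv; lra).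
    rewrite (derive_pt_eq_0 g c (g' c) (pr2 c P)) in E by (apply Hd; exact P).
    exact E.
Qed.

Lemma F_decr a b : 0 <= a -> a < b -> b <= 1/2 -> F b < F a.
Proof.
  intros Ha Hab Hb.
  destruct (cmvt id (fun _ => 1) a b Ha Hab ltac:(lra)) as [c [Hc E]].
  - intros c _. apply derivable_pt_lim_id.
  - intros c _. apply derivable_continuous_pt. apply derivable_pt_id.
  - unfold id in E.
    assert (ln c < ln (1 - c)) by (apply ln_increasing; lra).
    assert ((b - a) * (ln c - ln (1 - c)) < 0) by nra.
    lra.
Qed.

Lemma F_le a b : 0 <= a -> a <= b -> b <= 1/2 -> F b <= F a.
Proof. intros. destruct (Req_dec a b) as [->|]; [lra|]. left; apply F_decr; lra. Qed.

Lemma hb_lt a b : 0 <= a -> a < b -> b <= 1/2 -> hb a < hb b.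
Proof.
  intros. rewrite !hb_F. assert (H2 : ln 2 > 0) by (pose proof ln_lt_2; lra).
  pose proof (F_decr a b H H0 H1). unfold Rdiv.
  apply Rmult_lt_compat_r; [apply Rinv_0_lt_compat; lra| lra].
Qed.

Lemma hb_mono a b : 0 <= a <= 1/2 -> 0 <= b <= 1/2 -> hb a <= hb b -> a <= b.
Proof.
  intros. destruct (Rle_dec a b); [assumption|].
  pose proof (hb_lt b a ltac:(lra) ltac:(lra) ltac:(lra)). lra.
Qed.

Lemma ln_le a b : 0 < a -> a <= b -> ln a <= ln b.
Proof. intros. destruct (Req_dec a b) as [->|]; [lra|]. left; apply ln_increasing; lra. Qed.

Definition L (p : R) := ln (1 - 2 * p).

Lemma L_deriv c : 1 - 2 * c > 0 -> derivable_pt_lim L c (-2 / (1 - 2 * c)).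
Proof.
  intros Hc. apply is_derive_Reals. unfold L. auto_derive.
  - lra.
  - field. lra.
Qed.

Lemma L_cont c : 1 - 2 * c > 0 -> continuity_pt L c.
Proof. intros. apply derivable_continuous_pt. eexists. apply L_deriv. exact H. Qed.

Lemma key a1 a2 b2 b1 : 0 <= a1 -> a1 <= a2 -> a2 <= b2 -> b2 <= b1 -> b1 <= 1/2 ->
  F a1 + F b1 = F a2 + F b2 ->
  (1 - 2 * a1) * (1 - 2 * b1) <= (1 - 2 * a2) * (1 - 2 * b2).
Proof.
  intros H1 H2 H3 H4 H5 HF.
  destruct (Req_dec b1 (1/2)) as [Eb|Eb].
  { rewrite Eb. nra. }
  assert (Hb1 : b1 < 1/2) by lra.
  assert (Hlog : L a1 + L b1 <= L a2 + L b2).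
  { destruct (Req_dec a1 a2) as [Ea|Ea].
    - subst a2. unfold L. pose proof (ln_le (1 - 2 * b1) (1 - 2 * b2) ltac:(lra) ltac:(lra)). lra.
    - destruct (cmvt L (fun c => -2 / (1 - 2 * c)) a1 a2 H1 ltac:(lra) ltac:(lra)) as [xi [Hxi Exi]].
      + intros c Hc. apply L_deriv. lra.
      + intros c Hc. apply L_cont. lra.
      + assert (Uxi : ln xi < ln (1 - xi)) by (apply ln_increasing; lra).
        assert (Exi' : (L a2 - L a1) * ((1 - 2 * xi) * (ln (1 - xi) - ln xi)) = 2 * (F a2 - F a1)).
        { replace ((L a2 - L a1) * ((1 - 2 * xi) * (ln (1 - xi) - ln xi))) with
            (- ((L a2 - L a1) * (ln xi - ln (1 - xi))) * (1 - 2 * xi)) by ring.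
          rewrite Exi. field. lra. }
        destruct (Req_dec b2 b1) as [Eb2|Eb2].
        * subst b2. assert (F a1 = F a2) by lra.
          assert (L a2 - L a1 = 0).
          { assert (Hpos : (1 - 2 * xi) * (ln (1 - xi) - ln xi) > 0) by nra.
            assert ((L a2 - L a1) * ((1 - 2 * xi) * (ln (1 - xi) - ln xi)) = 0) by lra.
            apply Rmult_integral in H0. destruct H0; lra. }
          lra.
        * destruct (cmvt L (fun c => -2 / (1 - 2 * c)) b2 b1 ltac:(lra) ltac:(lra) ltac:(lra)) as [eta [Heta Eeta]].
          -- intros c Hc. apply L_deriv. lra.
          -- intros c Hc. apply L_cont. lra.
          -- assert (Ueta : ln eta < ln (1 - eta)) by (apply ln_increasing; lra).
             assert (Eeta' : (L b1 - L b2) * ((1 - 2 * eta) * (ln (1 - eta) - ln eta)) = 2 * (F b1 - F b2)).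
             { replace ((L b1 - L b2) * ((1 - 2 * eta) * (ln (1 - eta) - ln eta))) with
                 (- ((L b1 - L b2) * (ln eta - ln (1 - eta))) * (1 - 2 * eta)) by ring.
               rewrite Eeta. field. lra. }
             assert (D0 : F a2 - F a1 <= 0) by (pose proof (F_le a1 a2); lra).
             assert (l1 : ln xi < ln eta) by (apply ln_increasing; lra).
             assert (l2 : ln (1 - eta) < ln (1 - xi)) by (apply ln_increasing; lra).
             set (px := (1 - 2 * xi) * (ln (1 - xi) - ln xi)) in *.
             set (pe := (1 - 2 * eta) * (ln (1 - eta) - ln eta)) in *.
             assert (Hpe : 0 < pe) by (unfold pe; nra).
             assert (Hpp : pe <= px) by (unfold pe, px; nra).
             set (P := L a2 - L a1) in *. set (Q := L b1 - L b2) in *.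
             assert (P <= 0) by nra.
             assert ((Q - P) * pe <= 0) by nra.
             assert (Q - P <= 0) by nra.
             unfold P, Q in *; lra. }
  unfold L in Hlog.
  rewrite <- !ln_mult in Hlog by lra.
  destruct (Rle_dec ((1 - 2 * a1) * (1 - 2 * b1)) ((1 - 2 * a2) * (1 - 2 * b2))) as [|Hn]; [assumption|].
  assert (ln ((1 - 2 * a2) * (1 - 2 * b2)) < ln ((1 - 2 * a1) * (1 - 2 * b1))) by (apply ln_increasing; nra).
  lra.
Qed.

Theorem mainTheorem4 (hinv : R -> R)
  (hinv_range : forall t, 0 <= t <= 1 -> 0 <= hinv t <= 1/2)
  (hinv_inv : forall t, 0 <= t <= 1 -> hb (hinv t) = t)
  (x : R) (hx : 0 <= x <= 1) :
  forall t1 t2,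
    Rmax 0 (2 * x - 1) <= t1 -> t1 <= t2 -> t2 <= x ->
    hb (bconv (hinv t2) (hinv (2 * x - t2)))
      <= hb (bconv (hinv t1) (hinv (2 * x - t1))).
Proof.
  intros t1 t2 Ht1 H12 Ht2.
  pose proof (Rmax_l 0 (2 * x - 1)). pose proof (Rmax_r 0 (2 * x - 1)).
  assert (R1 : 0 <= t1 <= 1) by lra. assert (R2 : 0 <= t2 <= 1) by lra.
  assert (R3 : 0 <= 2 * x - t1 <= 1) by lra. assert (R4 : 0 <= 2 * x - t2 <= 1) by lra.
  pose proof (hinv_range _ R1). pose proof (hinv_range _ R2).
  pose proof (hinv_range _ R3). pose proof (hinv_range _ R4).
  pose proof (hinv_inv _ R1). pose proof (hinv_inv _ R2).
  pose proof (hinv_inv _ R3). pose proof (hinv_inv _ R4).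
  set (a1 := hinv t1) in *. set (a2 := hinv t2) in *.
  set (b1 := hinv (2 * x - t1)) in *. set (b2 := hinv (2 * x - t2)) in *.
  assert (A12 : a1 <= a2) by (apply hb_mono; lra).
  assert (A2B : a2 <= b2) by (apply hb_mono; lra).
  assert (B21 : b2 <= b1) by (apply hb_mono; lra).
  assert (HF : F a1 + F b1 = F a2 + F b2).
  { assert (E : hb a1 + hb b1 = hb a2 + hb b2) by lra.
    rewrite !hb_F in E. assert (Hl2 : ln 2 > 0) by (pose proof ln_lt_2; lra).
    assert (X1 : F a1 + F b1 = -(ln 2) * (-F a1/ln 2 + -F b1/ln 2)) by (field; lra).
    assert (X2 : F a2 + F b2 = -(ln 2) * (-F a2/ln 2 + -F b2/ln 2)) by (field; lra).
    rewrite X1, X2, E. reflexivity. }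
  pose proof (key a1 a2 b2 b1 ltac:(lra) A12 A2B B21 ltac:(lra) HF) as K.
  unfold bconv.
  set (c1 := a1 * (1 - b1) + (1 - a1) * b1). set (c2 := a2 * (1 - b2) + (1 - a2) * b2).
  assert (C : c2 <= c1) by (unfold c1, c2; nra).
  assert (C1 : c1 <= 1/2) by (unfold c1; nra).
  assert (C2 : 0 <= c2) by (unfold c2; nra).
  destruct (Req_dec c2 c1) as [->|]; [lra|].
  left. apply hb_lt; lra.
Qed.
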